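(* Let $G=(P,t_2Q)$ be a pair of homogeneous polynomials in $(t_1,t_2)$ of degree $d$ with $P(1,0)\ne0$. Then the resultant of $F=F_{t_1,t_2}(G)/t_2^2$ is $$\mathrm{Res}(F)=4^{4d}[Q(1,1)-P(1,1)]^4P(0,1)^4P(1,0)^{-8}\mathrm{Res}(G)^{16}.$$ In particular, for a homogeneous lift $C$ of a marked point $c\in\mathbb{C}(t)\setminus\{0,1,t\}$ with $F_1=F_{t_1,t_2}(C)/\gcd(F_{t_1,t_2}(C))=(P_1,Q_1)$, $d=\deg F_1$, and $F_{n+1}=F_{t_1,t_2}(F_n)/t_2^2$, one has for all $n\ge1$ $$\mathrm{Res}(F_n)=4^{A_nd}\left(\frac{(P_1(1,1)-Q_1(1,1))P_1(0,1)}{P_1(1,0)^2}\right)^{A_n}\mathrm{Res}(F_1)^{4^{2(n-1)}},\qquad A_n=\frac{4^{2(n-1)}-4^{n-1}}{3}.$$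
   Context: $F_{t_1,t_2}(z,w)=\big((t_1w^2-t_2z^2)^2,\;4t_2zw(w-z)(t_1w-t_2z)\big)$; for a pair of homogeneous polynomials $H=(H_1,H_2)$ in $(t_1,t_2)$, $F_{t_1,t_2}(H)$ means substituting $(z,w)=(H_1,H_2)$. $\mathrm{Res}$ denotes the resultant (Sylvester determinant) of a pair of homogeneous polynomials of the same degree. A homogeneous lift of $c$ is a pair of coprime homogeneous polynomials $C=(c_1,c_2)$ of equal degree with $c(t)=c_1(t,1)/c_2(t,1)$; $\gcd$ denotes the gcd of the two coordinates. *)

(* Defs.v *)
From HB Require Import structures.
From mathcomp Require Import all_boot all_order all_algebra all_field.
From mathcomp Require Import fraction.
Set Implicit Arguments.
Unset Strict Implicit.
Unset Printing Implicit Defensive.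
Import Order.TTheory GRing.Theory Num.Theory.
Local Open Scope ring_scope.

(* A homogeneous polynomial H(t1,t2) of degree d over R is encoded by its
   dehomogenization p(t) = H(t,1), a univariate polynomial with
   size p <= d.+1; the coefficient of t1^i t2^(d-i) in H is p`_i, so
   H(t1,t2) = t2^d p(t1/t2).  The degree d is always carried explicitly.
   Under this encoding: H(1,1) = p.[1], H(0,1) = p`_0, H(1,0) = p`_d,
   multiplication by t1 is 'X * _, multiplication by t2 is the identity on
   the encoding (degree + 1), products of forms are products of polys. *)

Section BinaryForms.
Variable R : fieldType.

Definition binform (d : nat) (p : {poly R}) : bool := (size p <= d.+1)%N.

(* two forms of degree d are coprime (no common non-constant homogeneous
   factor): their dehomogenizations are coprime and t2 does not divide both *)
Definition coprime_forms (d : nat) (p q : {poly R}) : bool :=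
  coprimep p q && ((size p == d.+1) || (size q == d.+1)).

(* F_{t1,t2}(z,w) = ((t1 w^2 - t2 z^2)^2, 4 t2 z w (w - z)(t1 w - t2 z)),
   applied to a pair of forms of degree d; result has degree 4d+2.
   Dividing the result by t2^2 (when possible) gives the same encoding
   read at degree 4d. *)
Definition Fmap (H : {poly R} * {poly R}) : {poly R} * {poly R} :=
  let: (z, w) := H in
  ((('X * w ^+ 2 - z ^+ 2) ^+ 2),
   (4%:R * z * w * (w - z) * ('X * w - z))).

Definition Fiter (F1 : {poly R} * {poly R}) (n : nat) := iter n Fmap F1.

(* Sylvester matrix of two binary forms of degree d:
   row i of the block for A = sum_k a_k t1^k t2^(d-k) is
   (0,..,0, a_d, a_(d-1), ..., a_0, 0, ..., 0) starting at column i. *)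
Definition sylv_rows (d : nat) (p : {poly R}) : 'M[R]_(d, d + d) :=
  \matrix_(i < d, j < d + d)
    (if ((i <= j) && (j <= i + d))%N then p`_(d + i - j) else 0).

Definition hres (d : nat) (p q : {poly R}) : R :=
  \det (col_mx (sylv_rows d p) (sylv_rows d q)).

End BinaryForms.

(* A_n = (4^(2(n-1)) - 4^(n-1)) / 3 (an exact division) *)
Definition A_exp (n : nat) : nat := ((4 ^ (2 * (n - 1)) - 4 ^ (n - 1)) %/ 3)%N.

Notation "x %:F" := (@FracField.tofrac _ x) : ring_scope.

(* Main.v *)
Require Import Defs.
From HB Require Import structures.
From mathcomp Require Import all_boot all_order all_algebra all_field.
From mathcomp Require Import fraction.
From mathcomp Require Import ring lra zify all_fingroup.
Import Order.TTheory GRing.Theory Num.Theory.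
Local Open Scope ring_scope.

Section L.
Variable F : fieldType.

Lemma poly_expand_rev d (f : {poly F}) : (size f <= d)%N ->
  f = \sum_(k < d) (f`_(d - k.+1))%:P * 'X^(d - k.+1).
Proof.
move=> Hs.
have -> : \sum_(k < d) (f`_(d - k.+1))%:P * 'X^(d - k.+1) = \sum_(k < d) f`_k *: 'X^k.
  by rewrite [RHS](reindex_inj rev_ord_inj); apply: eq_bigr => k _; rewrite mul_polyC.
rewrite -poly_def; apply/polyP => i; rewrite coef_poly.
by case: ltnP => // H; rewrite nth_default // (leq_trans Hs).
Qed.

Lemma vecE d (f : {poly F}) (i j : nat) : (size f <= d.+1)%N -> (i < d)%N -> (j < d + d)%N ->
  (if ((i <= j) && (j <= i + d))%N then f`_(d + i - j) else 0) =
  ('X^(d - i.+1) * f)`_(d + d - j.+1).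
Proof.
move=> Hs Hi Hj; rewrite coefXnM.
case: (leqP i j) => Hij /=.
  case: (leqP j (i + d)) => Hjd.
    rewrite ifF; last by apply/negbTE; rewrite -leqNgt; lia.
    congr (f`_ _); lia.
  by rewrite ifT //; lia.
rewrite ifF; last by apply/negbTE; rewrite -leqNgt; lia.
by rewrite nth_default // (leq_trans Hs) //; lia.
Qed.


Lemma hres_block d (p q : {poly F}) : size p = d.+1 -> (size q <= d.+1)%N ->
  hres d p q = lead_coef p ^+ d *
    \det (\matrix_(i < d, k < d) (('X^(d - i.+1) * q) %% p)`_(d - k.+1)).
Proof.
move=> Hp Hq.
have p0 : p != 0 by rewrite -size_poly_gt0 Hp.
set Top := sylv_rows d p.
set Cq : 'M[F]_d := \matrix_(i < d, k < d) (('X^(d - i.+1) * q) %/ p)`_(d - k.+1).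
set Rq : 'M[F]_d := \matrix_(i < d, k < d) (('X^(d - i.+1) * q) %% p)`_(d - k.+1).
set Bot : 'M[F]_(d, d + d) :=
  \matrix_(k < d, j < d + d) (('X^(d - k.+1) : {poly F})`_(d + d - j.+1)).
have HS : sylv_rows d q = Cq *m Top + Rq *m Bot.
  apply/matrixP => i j; rewrite /Top /sylv_rows !mxE vecE //.
  rewrite {1}(divp_eq ('X^(d - i.+1) * q) p) coefD; congr (_ + _).
    rewrite {1}(poly_expand_rev d (('X^(d - i.+1) * q) %/ p)); last first.
      rewrite size_divp // Hp /= leq_subLR (leq_trans (size_mul_leq _ _)) //.
      rewrite size_polyXn; move: (ltn_ord i) Hq; lia.
    rewrite big_distrl /= coef_sum; apply: eq_bigr => k _.
    rewrite !mxE vecE //.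
    have E (c : F) (a b : {poly F}) m : (c%:P * a * b)`_m = c * (a * b)`_m.
      by rewrite -mulrA coefCM.
    exact: E.
    by rewrite Hp.
  rewrite {1}(poly_expand_rev d (_ %% p)); last first.
    by rewrite -ltnS -Hp ltn_modp.
  rewrite coef_sum; apply: eq_bigr => k _.
  by rewrite !mxE coefCM.
rewrite /hres -/Top HS.
have -> : col_mx Top (Cq *m Top + Rq *m Bot) = block_mx 1 0 Cq Rq *m col_mx Top Bot.
  by rewrite mul_block_col mul1mx mul0mx addr0.
rewrite det_mulmx det_lblock det1 mul1r mulrC; congr (_ * _).
rewrite -[Top]hsubmxK -[Bot]hsubmxK -block_mxEv.
have -> : lsubmx Bot = 0.
  apply/matrixP => k j; rewrite !mxE coefXn /=.
  by case: eqP => // H; move: (ltn_ord j) (ltn_ord k); lia.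
have -> : rsubmx Bot = 1.
  apply/matrixP => k j; rewrite !mxE coefXn /=.
  case: (eqVneq k j) => [->|H]; first by congr (_%:R); apply/eqP; lia.
  congr (_%:R); case: eqP => // E; exfalso; move: H; rewrite -val_eqE /=.
  by move: (ltn_ord j) (ltn_ord k) E; lia.
rewrite det_ublock det1 mulr1 -det_tr det_trig; last first.
  apply/is_trig_mxP => i j Hij; rewrite !mxE /=.
  by rewrite ifF //; apply/negbTE; rewrite negb_and -ltnNge Hij.
rewrite lead_coefE Hp /=.
rewrite (eq_bigr (fun _ => p`_d)); last by move=> i _; rewrite !mxE /= leqnn leq_addr addnK.
by rewrite prodr_const card_ord.
Qed.
End L.
Section L2.
Variable F : fieldType.

Definition myC (d : nat) (p : {poly F}) : 'M[F]_d :=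
  \matrix_(i < d, j < d) if (i == d.-1 :> nat) then - p`_j else (i.+1 == j :> nat)%:R.

Lemma myC_char d (p : {poly F}) : size p = d.+1 -> p \is monic ->
  char_poly (myC d p) = p.
Proof.
move=> Hs Hm.
have E : (size p).-1 = d by rewrite Hs.
case: _ / E; exact: companionmxK.
Qed.

Lemma size_le_coef (f : {poly F}) m : (size f <= m.+1)%N -> f`_m = 0 -> (size f <= m)%N.
Proof.
move=> H1 H2; rewrite leqNgt; apply/negP => H4.
have H3 : size f = m.+1 by apply/eqP; rewrite eqn_leq H1 H4.
have : lead_coef f != 0.
  by rewrite lead_coef_eq0 -size_poly_gt0 H3.
by rewrite /lead_coef H3 /= H2 eqxx.
Qed.

Definition phi (d : nat) (p f : {poly F}) : 'rV[F]_d := \row_(k < d) (f %% p)`_k.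

Lemma phiD d p f g : phi d p (f + g) = phi d p f + phi d p g.
Proof. by apply/rowP => k; rewrite !mxE modpD coefD. Qed.

Lemma phiZ d p f c : phi d p (c%:P * f) = c *: phi d p f.
Proof. by apply/rowP => k; rewrite !mxE mul_polyC modpZl coefZ. Qed.

Lemma phiX n (p f : {poly F}) : size p = n.+2 -> p \is monic ->
  phi n.+1 p (f * 'X) = phi n.+1 p f *m myC n.+1 p.
Proof.
move=> Hs Hm.
have p0 : p != 0 by rewrite -size_poly_gt0 Hs.
set h := f %% p.
have Hh : (size h <= n.+1)%N by rewrite -ltnS -Hs ltn_modp.
have E : (f * 'X) %% p = h * 'X - h`_n *: p.
  rewrite mulrC -modp_mul mulrC -/h.
  rewrite -{1}(subrK (h`_n *: p) (h * 'X)) -mul_polyC addrC.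
  rewrite modp_addl_mul_small // Hs ltnS; apply: size_le_coef.
    rewrite (leq_trans (size_polyD _ _)) // geq_max size_polyN.
    apply/andP; split.
      by rewrite (leq_trans (size_mul_leq _ _)) // size_polyX addn2 /= ltnS.
    by rewrite mul_polyC (leq_trans (size_scale_leq _ _)) // Hs.
  rewrite coefB coefMX /= mul_polyC coefZ.
  have -> : p`_n.+1 = 1 by move: (monicP Hm); rewrite lead_coefE Hs.
  by rewrite mulr1 subrr.
apply/rowP => k; rewrite !mxE E coefB coefMX coefZ.
rewrite big_ord_recr /= !mxE /= eqxx.
case: k => [[|k] Hk] /=.
  rewrite big1 ?add0r; first by rewrite mulrN.
  by move=> i _; rewrite !mxE /= (ltn_eqF (ltn_ord i)) /= mulr0.
have Hk' : (k < n)%N by [].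
rewrite (bigD1 (Ordinal Hk')) //= !mxE /= (ltn_eqF Hk') eqxx mulr1.
rewrite big1 ?addr0 /=; last first.
move=> i Hi; rewrite !mxE /= (ltn_eqF (ltn_ord i)) /= eqSS.
case: eqP => [Eik|]; last by rewrite mulr0.
  by move: Hi; rewrite -val_eqE /= Eik eqxx.
by rewrite mulrN.
Qed.

Lemma phiM n (p f g : {poly F}) : size p = n.+2 -> p \is monic ->
  phi n.+1 p (f * g) = phi n.+1 p f *m horner_mx (myC n.+1 p) g.
Proof.
move=> Hs Hm; elim/poly_ind: g => [|g c IH].
  by rewrite mulr0 rmorph0 mulmx0; apply/rowP => k; rewrite !mxE mod0p coef0.
rewrite mulrDr mulrA phiD (mulrC f c%:P) phiZ phiX // IH.
rewrite rmorphD rmorphM /= horner_mx_X horner_mx_C mulmxDr mulmxA.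
by rewrite mul_mx_scalar.
Qed.

Lemma Rstd_horner n (p q : {poly F}) : size p = n.+2 -> p \is monic ->
  \matrix_(i < n.+1, k < n.+1) (('X^i * q) %% p)`_k = horner_mx (myC n.+1 p) q.
Proof.
move=> Hs Hm; apply/matrixP => i k.
have := congr1 (fun v : 'rV_n.+1 => v 0 k) (phiM n p 'X^i q Hs Hm).
rewrite !mxE /= => ->.
have -> : phi n.+1 p 'X^i = delta_mx 0 i.
  apply/rowP => j; rewrite !mxE modp_small ?coefXn; last by rewrite size_polyXn Hs ltnS.
  by rewrite eqxx.
rewrite (bigD1 i) //= mxE !eqxx mul1r big1 ?addr0 // => j /negPf ji.
by rewrite mxE ji mul0r.
Qed.
End L2.
Section L3.
Variable F : closedFieldType.

Lemma det_XsubmxC n (C : 'M[F]_n.+1) u :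
  \det (C - u%:M) = (-1) ^+ n.+1 * (char_poly C).[u].
Proof.
rewrite -[C - _]opprK opprB -scaleN1r detZ; congr (_ * _).
rewrite /char_poly -horner_evalE -det_map_mx; congr (\det _).
apply/matrixP=> i j; rewrite !mxE /= horner_evalE hornerD hornerN hornerC.
by rewrite hornerMn hornerX.
Qed.

Lemma prod_sub_swap (rs : seq F) u :
  \prod_(r <- rs) (r - u) = (-1) ^+ size rs * \prod_(r <- rs) (u - r).
Proof.
elim: rs => [|r rs IH]; first by rewrite !big_nil expr0 mul1r.
by rewrite !big_cons IH /= exprS -opprB; ring.
Qed.

Lemma prod_const_seq (I : Type) (rs : seq I) (x : F) :
  \prod_(r <- rs) x = x ^+ size rs.
Proof. by elim: rs => [|r rs IH]; rewrite ?big_nil ?big_cons ?IH ?exprS. Qed.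

Lemma det_horner_mx n (C : 'M[F]_n.+1) (rs : seq F) (q : {poly F}) :
  char_poly C = \prod_(r <- rs) ('X - r%:P) ->
  \det (horner_mx C q) = \prod_(r <- rs) q.[r].
Proof.
move=> HC.
have Hs : size rs = n.+1.
  by move: (size_char_poly C); rewrite HC size_prod_XsubC => -[].
have [us Hq] := closed_field_poly_normal q.
rewrite Hq linearZ /= rmorph_prod detZ.
have -> : \det (\prod_(u <- us) horner_mx C ('X - u%:P))
        = \prod_(u <- us) ((-1) ^+ n.+1 * (char_poly C).[u]).
  elim: us {Hq} => [|u us IH]; first by rewrite !big_nil det1.
  by rewrite !big_cons det_mulmx IH rmorphB /= horner_mx_X horner_mx_C det_XsubmxC.
rewrite [RHS](eq_bigr (fun r => lead_coef q * \prod_(z <- us) (r - z))); last first.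
  by move=> r _ /=; rewrite hornerZ horner_prod; congr (_ * _); apply: eq_bigr => z _; rewrite hornerXsubC.
rewrite [RHS]big_split /= prod_const_seq Hs; congr (_ * _).
rewrite [RHS]exchange_big /=; apply: eq_bigr => u _.
rewrite HC horner_prod prod_sub_swap Hs; congr (_ * _).
by apply: eq_bigr => r _; rewrite hornerXsubC.
Qed.
End L3.

Lemma det_perm_conj (R : comNzRingType) n (s : 'S_n) (A : 'M[R]_n) :
  \det (row_perm s (col_perm s A)) = \det A.
Proof.
rewrite row_permE col_permE !det_mulmx !det_perm odd_permV.
by rewrite mulrCA -signr_addb addbb expr0 mulr1.
Qed.

Section R1.
Variable F : closedFieldType.

Lemma hres_roots n (p q : {poly F}) (rs : seq F) :
  size p = n.+2 -> (size q <= n.+2)%N ->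
  p = lead_coef p *: \prod_(r <- rs) ('X - r%:P) ->
  hres n.+1 p q = lead_coef p ^+ n.+1 * \prod_(r <- rs) q.[r].
Proof.
move=> Hp Hq Hr.
rewrite hres_block //; congr (_ * _).
set a := lead_coef p.
have a0 : a != 0 by rewrite lead_coef_eq0 -size_poly_gt0 Hp.
set pt := \prod_(r <- rs) ('X - r%:P).
have Hpt : size pt = n.+2 by rewrite -Hp Hr size_scale.
have Hm : pt \is monic by apply: monic_prod_XsubC.
pose s := perm (@rev_ord_inj n.+1).
have -> : \matrix_(i < n.+1, k < n.+1) (('X^(n.+1 - i.+1) * q) %% p)`_(n.+1 - k.+1)
   = row_perm s (col_perm s (\matrix_(i < n.+1, k < n.+1) (('X^i * q) %% pt)`_k)).
  apply/matrixP => i k; rewrite !mxE !permE /=.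
  by rewrite Hr modpZr.
rewrite det_perm_conj Rstd_horner // (@det_horner_mx F _ _ rs) //.
by rewrite myC_char.
Qed.
End R1.
Section P1.
Variable F : closedFieldType.

Lemma prod_const_seq' (I : Type) (rs : seq I) (x : F) :
  \prod_(r <- rs) x = x ^+ size rs.
Proof. by elim: rs => [|r rs IH]; rewrite ?big_nil ?big_cons ?IH ?exprS. Qed.

Lemma prod_sub_swap' (rs : seq F) u :
  \prod_(r <- rs) (r - u) = (-1) ^+ size rs * \prod_(r <- rs) (u - r).
Proof.
elim: rs => [|r rs IH]; first by rewrite !big_nil expr0 mul1r.
by rewrite !big_cons IH /= exprS -opprB; ring.
Qed.

Lemma prodM (I : Type) (rs : seq I) (f g : I -> F) :
  \prod_(r <- rs) (f r * g r) = \prod_(r <- rs) f r * \prod_(r <- rs) g r.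
Proof. exact: big_split. Qed.

Lemma prod_sqr (I : Type) (rs : seq I) (f : I -> F) :
  \prod_(r <- rs) (f r) ^+ 2 = (\prod_(r <- rs) f r) ^+ 2.
Proof. elim: rs => [|r rs IH]; rewrite ?big_nil ?expr1n // !big_cons IH; ring. Qed.

Lemma hornerP (c : F) us x :
  (c *: \prod_(u <- us) ('X - u%:P)).[x] = c * \prod_(u <- us) (x - u).
Proof.
rewrite hornerZ horner_prod; congr (_ * _).
by apply: eq_bigr => u _; rewrite hornerXsubC.
Qed.

Lemma normal_roots (f : {poly F}) : exists us : seq F,
  [/\ f = lead_coef f *: \prod_(u <- us) ('X - u%:P),
      forall u, u \in us -> f.[u] = 0 &
      f != 0 -> size us = (size f).-1].
Proof.
have [us Hf] := closed_field_poly_normal f.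
exists us; split => //.
  move=> u Hu; rewrite Hf hornerP.
  by rewrite (big_rem u Hu) /= subrr mul0r mulr0.
move=> f0; rewrite [in RHS]Hf size_scale ?size_prod_XsubC //.
by rewrite lead_coef_eq0.
Qed.

Lemma swap (P f : {poly F}) (a c : F) (rs us : seq F) :
  a != 0 -> P = a *: \prod_(r <- rs) ('X - r%:P) ->
  f = c *: \prod_(u <- us) ('X - u%:P) ->
  \prod_(r <- rs) f.[r] =
    c ^+ size rs * \prod_(u <- us) ((-1) ^+ size rs * P.[u] / a).
Proof.
move=> a0 HP Hf.
rewrite Hf (eq_bigr (fun r => c * \prod_(u <- us) (r - u))); last by move=> r _; rewrite hornerP.
rewrite big_split /= prod_const_seq'; congr (_ * _).
rewrite exchange_big /=; apply: eq_bigr => u _.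
by rewrite HP hornerP prod_sub_swap'; field.
Qed.

Arguments swap {P f a c rs us}.

Lemma roots0 (p : {poly F}) a rs : p = a *: \prod_(r <- rs) ('X - r%:P) ->
  forall r, r \in rs -> p.[r] = 0.
Proof. by move=> -> r Hr; rewrite hornerP (big_rem r Hr) /= subrr mul0r mulr0. Qed.

Arguments roots0 {p a rs}.

Lemma coef0_roots (p : {poly F}) a rs : p = a *: \prod_(r <- rs) ('X - r%:P) ->
  p.[0] = a * \prod_(r <- rs) (- r).
Proof. by move=> ->; rewrite hornerP; congr (_ * _); apply: eq_bigr => r _; rewrite sub0r. Qed.

Arguments coef0_roots {p a rs}.

Lemma sgn_dd d : (-1) ^+ (d + d) = 1 :> F.
Proof. by rewrite exprD -expr2 -exprM mulnC exprM sqrrN !expr1n. Qed.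

Lemma pow_dd (a : F) d : (a ^+ 2) ^+ d = a ^+ (d + d).
Proof. by rewrite -exprM; congr (_ ^+ _); lia. Qed.

Lemma pow_dd2 (x : F) d : (x ^+ d) ^+ 2 = x ^+ (d + d).
Proof. by rewrite -exprM; congr (_ ^+ _); lia. Qed.

Lemma sgn_sq d : ((-1) ^+ d) ^+ 2 = 1 :> F.
Proof. by rewrite pow_dd2 sgn_dd. Qed.

Section N.
Variables (p q : {poly F}) (a : F) (rs ss : seq F) (d : nat).
Hypotheses (a0 : a != 0) (Hrs : size rs = d) (Hss : size ss = (d + d)%N)
  (HP : p = a *: \prod_(r <- rs) ('X - r%:P))
  (HA : 'X * q ^+ 2 - p ^+ 2 = (- a ^+ 2) *: \prod_(s <- ss) ('X - s%:P)).

Let a20 : - a ^+ 2 != 0.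
Proof. by rewrite oppr_eq0 expf_neq0. Qed.

Lemma NP : \prod_(s <- ss) p.[s] = p.[0] / a * (\prod_(r <- rs) q.[r]) ^+ 2.
Proof.
rewrite (swap a20 HA HP) Hss sgn_dd.
rewrite (eq_big_seq (fun r => (- r) * q.[r] ^+ 2 / a ^+ 2)); last first.
  move=> r Hr /=; rewrite hornerD hornerN hornerM hornerX !horner_exp (roots0 HP _ Hr).
  by field; rewrite a0.
rewrite !big_split /= prod_const_seq' Hrs (coef0_roots HP).
have -> : (a ^- 2) ^+ d = (a ^+ (d + d))^-1 by rewrite -pow_dd exprVn.
have ad0 : a ^+ (d + d) != 0 by rewrite expf_neq0.
by field; rewrite ad0 a0.
Qed.

Lemma NQ : \prod_(s <- ss) q.[s] = (\prod_(r <- rs) q.[r]) ^+ 2.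
Proof.
have [us [Hq Hqr _]] := normal_roots q.
rewrite (swap a20 HA Hq) (swap a0 HP Hq) Hss Hrs sgn_dd exprMn pow_dd2 -prod_sqr.
congr (_ * _); apply: eq_big_seq => u Hu /=.
rewrite hornerD hornerN hornerM hornerX !horner_exp (Hqr u Hu).
rewrite exprMn exprMn sgn_sq; by field; rewrite a0.
Qed.

Lemma pow_prod (x : F) (vs : seq F) : x ^+ (size vs + size vs) = \prod_(v <- vs) x ^+ 2.
Proof. by rewrite prod_const_seq' pow_dd. Qed.

Variables (vs : seq F).
Hypotheses (Hvs : size vs = d) (HV : q - p = (- a) *: \prod_(v <- vs) ('X - v%:P)).

Lemma Rv : (\prod_(r <- rs) q.[r]) ^+ 2 = (\prod_(v <- vs) p.[v]) ^+ 2.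
Proof.
have -> : \prod_(r <- rs) q.[r] = \prod_(r <- rs) (q - p).[r].
  by apply: eq_big_seq => r Hr; rewrite hornerD hornerN (roots0 HP _ Hr) subr0.
rewrite (swap a0 HP HV) exprMn pow_dd2 Hrs -Hvs pow_prod -!prod_sqr -big_split /=.
apply: eq_bigr => v _; rewrite exprMn exprMn sgn_sq; by field; rewrite a0.
Qed.

Lemma NQP : \prod_(s <- ss) (q - p).[s] = (p.[1] - q.[1]) / a * (\prod_(r <- rs) q.[r]) ^+ 2.
Proof.
rewrite (swap a20 HA HV) Hss sgn_dd -Hvs pow_prod -big_split /=.
have Hv : forall v, v \in vs -> q.[v] = p.[v].
  by move=> v Hv; apply/eqP; rewrite -subr_eq0 -hornerN -hornerD (roots0 HV _ Hv).
rewrite (eq_big_seq (fun v => (1 - v) * p.[v] ^+ 2)); last first.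
  move=> v Hvv /=; rewrite hornerD hornerN hornerM hornerX !horner_exp (Hv v Hvv).
  by field.
rewrite prodM prod_sqr -Rv.
have -> : p.[1] - q.[1] = - (q - p).[1] by rewrite hornerD hornerN opprB.
rewrite HV hornerP; by field.
Qed.

Lemma NF : (\prod_(s <- ss) ('X * q - p).[s]) ^+ 2 =
  (p.[0] / a * ((p.[1] - q.[1]) / a) * (\prod_(r <- rs) q.[r]) ^+ 2) ^+ 2.
Proof.
have [ws [Hf Hfr _]] := normal_roots ('X * q - p).
have ma0 : - a != 0 by rewrite oppr_eq0.
have Hqv : forall v, v \in vs -> q.[v] = p.[v].
  by move=> v Hv; apply/eqP; rewrite -subr_eq0 -hornerN -hornerD (roots0 HV _ Hv).
have E : \prod_(s <- ss) ('X * q - p).[s] =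
   \prod_(r <- rs) ('X * q - p).[r] * \prod_(v <- vs) ('X * q - p).[v].
  rewrite (swap a20 HA Hf) (swap a0 HP Hf) (swap ma0 HV Hf) Hss Hrs Hvs sgn_dd.
  rewrite mulrACA -exprD -prodM; congr (_ * _); apply: eq_big_seq => w Hw /=.
  have Hw' : w * q.[w] = p.[w].
    apply/eqP; rewrite -subr_eq0; move: (Hfr w Hw).
    by rewrite hornerD hornerN hornerM hornerX => ->.
  rewrite !hornerD !hornerN hornerM hornerX !horner_exp.
  have -> : w * q.[w] ^+ 2 = q.[w] * p.[w] by rewrite -Hw'; ring.
  set sg := (-1) ^+ d.
  have sg2 : sg * sg = 1 by rewrite -expr2 /sg sgn_sq.
  by rewrite -{1}sg2; field; rewrite ma0 a0 a20.
have Er : \prod_(r <- rs) ('X * q - p).[r] = \prod_(r <- rs) r * \prod_(r <- rs) q.[r].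
  rewrite -prodM; apply: eq_big_seq => r Hr.
  by rewrite hornerD hornerN hornerM hornerX (roots0 HP _ Hr) subr0.
have Ev : \prod_(v <- vs) ('X * q - p).[v] = \prod_(v <- vs) (v - 1) * \prod_(v <- vs) p.[v].
  rewrite -prodM; apply: eq_big_seq => v Hv.
  by rewrite hornerD hornerN hornerM hornerX (Hqv v Hv); ring.
have E0 : (\prod_(r <- rs) r) ^+ 2 = (p.[0] / a) ^+ 2.
  rewrite (coef0_roots HP) mulrC mulKf // -!prod_sqr.
  by apply: eq_bigr => r _; rewrite sqrrN.
have E1 : (\prod_(v <- vs) (v - 1)) ^+ 2 = ((p.[1] - q.[1]) / a) ^+ 2.
  have -> : p.[1] - q.[1] = - (q - p).[1] by rewrite hornerD hornerN opprB.
  rewrite HV hornerP (_ : - (- a * _) / a = \prod_(u <- vs) (1 - u)); last by field.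
  rewrite -!prod_sqr.
  by apply: eq_bigr => v _; rewrite -sqrrN opprB.
rewrite E Er Ev !exprMn E0 -Rv.
move: E1; rewrite exprMn => ->; ring.
Qed.
End N.
End P1.

Arguments normal_roots {F}.
Arguments hres_roots {F n p q rs}.

Section Part1.
Variable F : closedFieldType.

Lemma size_ge_coef (p : {poly F}) d : p`_d != 0 -> (d < size p)%N.
Proof. by apply: contraR; rewrite -leqNgt => H; rewrite nth_default. Qed.

Lemma size_Xmul (r : {poly F}) : (size ('X * r)%R <= (size r).+1)%N.
Proof.
rewrite mulrC; have [->|r0] := eqVneq r 0; first by rewrite mul0r size_poly0.
by rewrite size_mulX.
Qed.

Lemma size_sq (r : {poly F}) : (size (r ^+ 2)%R <= (size r + size r).-1)%N.
Proof. by rewrite expr2 size_polyMleq. Qed.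

Lemma size_mul_le (r s : {poly F}) m k :
  (size r <= m.+1)%N -> (size s <= k.+1)%N -> (size (r * s)%R <= (m + k).+1)%N.
Proof.
move=> H1 H2; rewrite (leq_trans (size_polyMleq _ _)) //.
by move: H1 H2; case: (size r) => //= sr; lia.
Qed.

Arguments size_mul_le {r s m k}.

Lemma part1_gen (d : nat) (p q : {poly F}) :
  binform d p -> (size q <= d)%N -> p`_d != 0 ->
  hres (4 * d) (Fmap (p, q)).1 (Fmap (p, q)).2 =
    4%:R ^+ (4 * d) * (q.[1] - p.[1]) ^+ 4 * p`_0 ^+ 4 * (p`_d) ^- 8 * hres d p q ^+ 16.
Proof.
rewrite /binform /= => Hp Hq a0.
have Hsp : size p = d.+1 by apply/eqP; rewrite eqn_leq Hp size_ge_coef.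
case: d Hp Hq a0 Hsp => [|n] Hp Hq a0 Hsp.
  have -> : q = 0 by apply/eqP; rewrite -size_poly_eq0 -leqn0.
  rewrite /hres !det_mx00 (size1_polyC Hp) hornerC coefC /= expr1n mulr1 mul1r.
  by rewrite horner0 sub0r; field.
set d := n.+1.
set a := p`_d.
have Hla : lead_coef p = a by rewrite lead_coefE Hsp.
have [rs [HPl _ Hrs]] := normal_roots p.
have HP := HPl; rewrite Hla in HP.
have p0 : p != 0 by rewrite -size_poly_gt0 Hsp.
move: (Hrs p0); rewrite Hsp /= => {}Hrs.
set A := 'X * q ^+ 2 - p ^+ 2.
have Hp2 : size (p ^+ 2) = (d + d).+1.
  have := size_exp p 2; rewrite Hsp /=.
  have : p ^+ 2 != 0 by rewrite expf_neq0.
  rewrite -size_poly_gt0; case: (size (p ^+ 2)) => //= m _ ->; lia.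
have HXq : (size ('X * q ^+ 2)%R < (d + d).+1)%N.
  have h1 := size_Xmul (q ^+ 2).
  have h2 := size_sq q.
  move: h1 h2 Hq; set s1 := size q; set s2 := size (q ^+ 2); set s3 := size _; rewrite /d; lia.
have HsA : size A = (d + d).+1.
  by rewrite /A addrC size_addl size_polyN Hp2.
have HlA : lead_coef A = - a ^+ 2.
  rewrite /A addrC lead_coefDl ?size_polyN ?Hp2 // lead_coefN lead_coef_exp.
  by rewrite Hla.
have [ss [HA _ Hss]] := normal_roots A.
rewrite HlA in HA.
have A0 : A != 0 by rewrite -size_poly_gt0 HsA.
move: (Hss A0); rewrite HsA /= => {}Hss.
have Hqp : size (q - p) = d.+1.
  by rewrite addrC size_addl size_polyN Hsp // ltnS.
have [vs [HV _ Hvs]] := normal_roots (q - p).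
have HlV : lead_coef (q - p) = - a.
  by rewrite addrC lead_coefDl ?size_polyN ?Hsp ?ltnS // lead_coefN Hla.
rewrite HlV in HV.
have qp0 : q - p != 0 by rewrite -size_poly_gt0 Hqp.
move: (Hvs qp0); rewrite Hqp /= => {}Hvs.
have Hq' : (size q <= n.+2)%N by apply: leq_trans Hq _.
rewrite (hres_roots Hsp Hq' HPl) -/d Hla.
have E4 : (4 * d = (4 * n + 3).+1)%N by rewrite /d; lia.
rewrite E4 /=.
rewrite -/A.
have HP' : A ^+ 2 = lead_coef (A ^+ 2) *: \prod_(s <- ss ++ ss) ('X - s%:P).
  rewrite lead_coef_exp HlA big_cat /= {1}HA exprZn expr2 //.
have HsP' : size (A ^+ 2) = (4 * n + 3).+2.
  have := size_exp A 2; rewrite HsA /=.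
  have : A ^+ 2 != 0 by rewrite expf_neq0.
  rewrite -size_poly_gt0; case: (size (A ^+ 2)) => //= m _ ->; rewrite /d; lia.
have HsQ' : (size (4%:R * p * q * (q - p) * ('X * q - p))%R <= (4 * n + 3).+2)%N.
  have h5 : (size (4%:R : {poly F})%R <= 0.+1)%N by rewrite -polyC_natr size_polyC leq_b1.
  have h6 : (size ('X * q - p)%R <= n.+2)%N.
    rewrite (leq_trans (size_polyD _ _)) // geq_max size_polyN Hsp leqnn andbT.
    by rewrite (leq_trans (size_Xmul q)) // ltnS.
  have Hsp' : (size p <= n.+2)%N by rewrite Hsp.
  have Hqp' : (size (q - p)%R <= n.+2)%N by rewrite Hqp.
  have := size_mul_le (size_mul_le (size_mul_le (size_mul_le h5 Hsp') Hq) Hqp') h6.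
  move/leq_trans; apply; lia.
rewrite (hres_roots HsP' HsQ' HP') lead_coef_exp HlA big_cat /=.
rewrite -expr2.
rewrite (eq_bigr (fun s => 4%:R * (p.[s] * (q.[s] * ((q - p).[s] * ('X * q - p).[s]))))); last first.
  by move=> s _; rewrite !hornerM -polyC_natr hornerC !mulrA.
rewrite !prodM prod_const_seq' Hss !exprMn.
rewrite (@NF F p q a rs ss d a0 Hrs Hss HP HA vs Hvs HV).
rewrite (@NP F p q a rs ss d a0 Hrs Hss HP HA) (@NQ F p q a rs ss d a0 Hrs Hss HP HA).
rewrite (@NQP F p q a rs ss d a0 Hrs Hss HP HA vs Hvs HV) -horner_coef0.
have -> : (- a ^+ 2) ^+ (4 * n + 3).+1 * (- a ^+ 2) ^+ (4 * n + 3).+1 = (a ^+ d) ^+ 16.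
  rewrite -exprD exprNn sgn_dd mul1r -!exprM; congr (_ ^+ _); rewrite /d; lia.
have -> : ((4%:R : F) ^+ (d + d)) ^+ 2 = 4%:R ^+ (4 * n + 3).+1.
  by rewrite -!exprM; congr (_ ^+ _); rewrite /d; lia.
set R := \prod_(r <- rs) q.[r].
set ad := a ^+ d.
have ad0 : ad != 0 by rewrite expf_neq0.
by field.
Qed.
End Part1.
Arguments size_Xmul {F}.
Arguments size_sq {F}.
Arguments size_mul_le {F r s m k}.
Arguments part1_gen {F d p q}.


Section Part2.
Variable F : closedFieldType.

Lemma Fmap_step D (P Q : {poly F}) : size P = D.+1 -> (size Q <= D)%N ->
 [/\ size (Fmap (P, Q)).1 = (4 * D).+1, (size (Fmap (P, Q)).2 <= 4 * D)%N,
     (Fmap (P, Q)).1`_(4 * D) = P`_D ^+ 4,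
     (Fmap (P, Q)).1`_0 = P`_0 ^+ 4 &
     (Fmap (P, Q)).1.[1] - (Fmap (P, Q)).2.[1] = (P.[1] - Q.[1]) ^+ 4].
Proof.
move=> HP HQ /=.
have P0 : P != 0 by rewrite -size_poly_gt0 HP.
have HlP : lead_coef P = P`_D by rewrite lead_coefE HP.
set A := 'X * Q ^+ 2 - P ^+ 2.
have Hp2 : size (P ^+ 2) = (D + D).+1.
  have := size_exp P 2; rewrite HP /=.
  have : P ^+ 2 != 0 by rewrite expf_neq0.
  rewrite -size_poly_gt0; case: (size (P ^+ 2)) => //= m _ ->; lia.
have HXq : (size ('X * Q ^+ 2)%R < (D + D).+1)%N.
  have h1 := size_Xmul (Q ^+ 2).
  have h2 := size_sq Q.
  have [->|Q0] := eqVneq Q 0; first by rewrite expr0n mulr0 size_poly0.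
  move: h1 h2 HQ; set s1 := size Q; set s2 := size (Q ^+ 2); set s3 := size _.
  have : (0 < s1)%N by rewrite size_poly_gt0.
  lia.
have HsA : size A = (D + D).+1.
  by rewrite /A addrC size_addl size_polyN Hp2.
have HlA : lead_coef A = - P`_D ^+ 2.
  rewrite /A addrC lead_coefDl ?size_polyN ?Hp2 // lead_coefN lead_coef_exp.
  by rewrite HlP.
have A0 : A != 0 by rewrite -size_poly_gt0 HsA.
have HsA2 : size (A ^+ 2) = (4 * D).+1.
  have := size_exp A 2; rewrite HsA /=.
  have : A ^+ 2 != 0 by rewrite expf_neq0.
  rewrite -size_poly_gt0; case: (size (A ^+ 2)) => //= m _ ->; lia.
split => //.
- have [->|Q0] := eqVneq Q 0.
    by rewrite !(mulr0, mul0r) size_poly0.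
  have D0 : (0 < D)%N by rewrite (leq_trans _ HQ) // size_poly_gt0.
  have [m Dm] : exists m, D = m.+1 by exists D.-1; rewrite prednK.
  have h5 : (size (4%:R : {poly F})%R <= 0.+1)%N by rewrite -polyC_natr size_polyC leq_b1.
  have h6 : (size ('X * Q - P)%R <= m.+2)%N.
    rewrite (leq_trans (size_polyD _ _)) // geq_max size_polyN HP Dm leqnn andbT.
    by rewrite (leq_trans (size_Xmul Q)) // ltnS -Dm.
  have Hsp' : (size P <= m.+2)%N by rewrite HP Dm.
  have Hq : (size Q <= m.+1)%N by rewrite -Dm.
  have Hqp' : (size (Q - P)%R <= m.+2)%N.
    by rewrite (leq_trans (size_polyD _ _)) // geq_max size_polyN Hsp' (leq_trans Hq).
  have := size_mul_le (size_mul_le (size_mul_le (size_mul_le h5 Hsp') Hq) Hqp') h6.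
  move/leq_trans; apply; rewrite Dm; lia.
- have := lead_coef_exp A 2; rewrite lead_coefE HsA2 /= HlA => ->.
  by rewrite sqrrN -exprM.
- rewrite -!horner_coef0 -/A horner_exp /A hornerD hornerN hornerM hornerX !horner_exp.
  by rewrite mul0r sub0r sqrrN -exprM.
rewrite hornerM hornerD hornerN hornerM hornerX !horner_exp !hornerM -polyC_natr hornerC.
rewrite hornerD hornerN hornerD hornerN hornerM hornerX; ring.
Qed.

Lemma A_exp_t k : exists t, (4 ^ (2 * k) = 4 ^ k + 3 * t)%N.
Proof.
elim: k => [|k [t Ht]]; first by exists 0%N.
exists (4 * 4 ^ k + 16 * t)%N.
rewrite mulnS expnD Ht [(4 ^ k.+1)%N]expnS; set x := (4 ^ k)%N; rewrite (_ : (4 ^ 2 = 16)%N) //; lia.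
Qed.

Lemma A_exp_val k : exists t, A_exp k.+1 = t /\ (4 ^ (2 * k) = 4 ^ k + 3 * t)%N.
Proof.
have [t Ht] := A_exp_t k; exists t; split => //.
by rewrite /A_exp subSS subn0 Ht addKn mulKn.
Qed.

Lemma A_exp_S k : A_exp k.+2 = (4 ^ k.+1 + 16 * A_exp k.+1)%N.
Proof.
have [t [-> Ht]] := A_exp_val k.
have [u [-> Hu]] := A_exp_val k.+1.
move: Hu; rewrite mulnS expnD Ht (_ : (4 ^ 2 = 16)%N) // => Hu.
apply/eqP; rewrite -(eqn_pmul2l (_ : (0 < 3)%N)) //; apply/eqP.
move: Hu; rewrite !expnS; set x := (4 ^ k)%N; lia.
Qed.

Definition Kf (D : nat) (PQ : {poly F} * {poly F}) : F :=
  (PQ.1.[1] - PQ.2.[1]) * PQ.1`_0 / PQ.1`_D ^+ 2.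

Lemma iter_gen d (P1 Q1 : {poly F}) : size P1 = d.+1 -> (size Q1 <= d)%N ->
 forall k,
 [/\ size (Fiter (P1, Q1) k).1 = (4 ^ k * d).+1,
     (size (Fiter (P1, Q1) k).2 <= 4 ^ k * d)%N,
     Kf (4 ^ k * d) (Fiter (P1, Q1) k) = Kf d (P1, Q1) ^+ (4 ^ k) &
     hres (4 ^ k * d) (Fiter (P1, Q1) k).1 (Fiter (P1, Q1) k).2 =
       4%:R ^+ (A_exp k.+1 * d) * Kf d (P1, Q1) ^+ A_exp k.+1 * hres d P1 Q1 ^+ (4 ^ (2 * k))].
Proof.
move=> HP HQ; elim => [|k IH].
  rewrite /Fiter /= !expn0 !mul1n expr1; split => //.
  by rewrite /A_exp /= mul0n expr0 !mul1r expr1.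
have -> : Fiter (P1, Q1) k.+1 = Fmap (Fiter (P1, Q1) k) by rewrite /Fiter iterS.
have E4 : (4 ^ k.+1 * d = 4 * (4 ^ k * d))%N by rewrite expnS mulnA.
rewrite E4.
case: (Fiter (P1, Q1) k) IH => P Q /= [H1 H2 H3 H4].
have [S1 S2 S3 S4 S5] := Fmap_step _ _ _ H1 H2.
have Pd0 : P`_(4 ^ k * d) != 0.
  have : lead_coef P != 0 by rewrite lead_coef_eq0 -size_poly_gt0 H1.
  by rewrite lead_coefE H1.
have Hbf : binform (4 ^ k * d) P by rewrite /binform H1.
split => //.
- rewrite /Kf /= S3 S4 S5.
  move: H3; rewrite /Kf /= => H3.
  rewrite [(4 ^ k.+1)%N]expnS [(4 * 4 ^ k)%N]mulnC exprM -H3.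
  by field; exact: Pd0.
have := part1_gen Hbf H2 Pd0; rewrite /= => ->.
rewrite H4.
set K1 := Kf d (P1, Q1).
have HK : (Q.[1] - P.[1]) ^+ 4 * P`_0 ^+ 4 / P`_(4 ^ k * d) ^+ 8 = K1 ^+ (4 ^ k * 4).
  rewrite exprM -H3 /Kf /=; by field; exact: Pd0.
have HK' : 4%:R ^+ (4 * (4 ^ k * d)) * (Q.[1] - P.[1]) ^+ 4 * P`_0 ^+ 4 / P`_(4 ^ k * d) ^+ 8
   = 4%:R ^+ (4 * (4 ^ k * d)) * K1 ^+ (4 ^ k * 4) by rewrite -HK !mulrA.
rewrite HK' !exprMn -!exprM A_exp_S.
have e1 : ((4 ^ k.+1 + 16 * A_exp k.+1) * d = 4 * (4 ^ k * d) + A_exp k.+1 * d * 16)%N.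
  by rewrite expnS; set x := (4 ^ k)%N; nia.
have e2 : (4 ^ k.+1 + 16 * A_exp k.+1 = 4 ^ k * 4 + A_exp k.+1 * 16)%N.
  by rewrite expnS; set x := (4 ^ k)%N; nia.
have e3 : (4 ^ (2 * k.+1) = 4 ^ (2 * k) * 16)%N by rewrite mulnS expnD mulnC.
rewrite e1 e2 e3 !exprD; ring.
Qed.
End Part2.

Section Part3.
Variable F : closedFieldType.

Lemma size_sq_exact (r : {poly F}) : size (r ^+ 2) = (size r + size r).-1.
Proof.
have [->|r0] := eqVneq r 0; first by rewrite expr0n size_poly0.
by rewrite expr2 size_mul.
Qed.

Lemma size_Xmul_exact (r : {poly F}) : r != 0 -> size ('X * r) = (size r).+1.
Proof. by move=> r0; rewrite mulrC size_mulX. Qed.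

Lemma F1_sizes d (c1 c2 P1 Q1 g : {poly F}) : c2 != 0 ->
  binform d P1 -> binform d Q1 -> coprime_forms d P1 Q1 ->
  (Fmap (c1, c2)).1 = g * P1 -> (Fmap (c1, c2)).2 = g * Q1 ->
  size P1 = d.+1 /\ (size Q1 <= d)%N.
Proof.
rewrite /binform /coprime_forms /= => c20 HP HQ /andP[_ Hor] E1 E2.
set B := 'X * c2 ^+ 2 - c1 ^+ 2.
have c220 : c2 ^+ 2 != 0 by rewrite expf_neq0.
have Hs1 := size_Xmul_exact _ c220.
have Hs2 := size_sq_exact c2.
have Hs3 := size_sq_exact c1.
have Hb : (0 < size c2)%N by rewrite size_poly_gt0.
have HB : size B = maxn (size ('X * c2 ^+ 2)) (size (c1 ^+ 2)).
  move: Hs1 Hs2 Hs3 Hb; set s1 := size ('X * _); set s2 := size (c1 ^+ 2).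
  set b := size c2; set a := size c1 => Hs1 Hs2 Hs3 Hb.
  have [lt|lt] : (s2 < s1)%N \/ (s1 < s2)%N by lia.
    rewrite /B size_addl ?size_polyN // -/s1; lia.
  rewrite /B addrC size_addl ?size_polyN // -/s2; lia.
have B0 : B != 0 by rewrite -size_poly_gt0 HB; lia.
have HM1 : size (B ^+ 2) = (size B + size B).-1 := size_sq_exact B.
set M2 := 4%:R * c1 * c2 * (c2 - c1) * ('X * c2 - c1).
have HM2 : (size M2 < size (B ^+ 2))%N.
  have h1 := size_polyMleq (4%:R * c1 * c2 * (c2 - c1)) ('X * c2 - c1).
  have h2 := size_polyMleq (4%:R * c1 * c2) (c2 - c1).
  have h3 := size_polyMleq (4%:R * c1) c2.
  have h4 := size_polyMleq (4%:R : {poly F}) c1.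
  have h5 : (size (4%:R : {poly F})%R <= 1)%N by rewrite -polyC_natr size_polyC leq_b1.
  have h6 := size_polyD ('X * c2) (- c1).
  have h7 := size_Xmul c2.
  have h8 := size_polyD c2 (- c1).
  rewrite !size_polyN in h6 h8.
  move: h1 h2 h3 h4 h5 h6 h7 h8 HM1 HB Hs1 Hs2 Hs3 Hb.
  rewrite -/M2.
  set x1 := size M2; set x2 := size (4%:R * c1 * c2 * (c2 - c1)).
  set x3 := size (4%:R * c1 * c2); set x4 := size (4%:R * c1); set x5 := size (4%:R : {poly F}).
  set x6 := size ('X * c2 - c1); set x7 := size ('X * c2); set x8 := size (c2 - c1).
  set x9 := size (B ^+ 2); set x10 := size B; set s1 := size ('X * c2 ^+ 2).
  set s2 := size (c1 ^+ 2); set s3 := size (c2 ^+ 2); set b := size c2; set a := size c1.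
  lia.
move: E1 E2 => /= E1 E2; rewrite -/B in E1; rewrite -/M2 in E2.
have gP0 : g * P1 != 0 by rewrite -E1 expf_neq0.
have g0 : g != 0 by apply: contraNneq gP0 => ->; rewrite mul0r.
have P0 : P1 != 0 by apply: contraNneq gP0 => ->; rewrite mulr0.
have HQd : (size Q1 <= d)%N.
  have [->|Q0] := eqVneq Q1 0; first by rewrite size_poly0.
  move: HM2; rewrite E1 E2 !size_mul //.
  move: HP HQ; set u := size g; set v := size P1; set w := size Q1.
  have : (0 < u)%N by rewrite size_poly_gt0.
  lia.
split => //.
by move: Hor; case/orP => /eqP // H; move: HQd; rewrite H ltnn.
Qed.
End Part3.

Arguments F1_sizes {F d c1 c2 P1 Q1 g}.
Arguments iter_gen {F d P1 Q1}.

Theorem proposition3p2 :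
  (* Part 1: G = (P, t2 Q) of degree d, encoded by (p, q) with t2 | q,
     i.e. size q <= d; P(1,0) = p`_d <> 0. *)
  (forall (d : nat) (p q : {poly algC}),
      binform d p -> (size q <= d)%N -> p`_d != 0 ->
      hres (4 * d)%N (Fmap (p, q)).1 (Fmap (p, q)).2 =
        4%:R ^+ (4 * d)%N * (q.[1] - p.[1]) ^+ 4 * p`_0 ^+ 4 * (p`_d) ^- 8
        * hres d p q ^+ 16)
  /\
  (* Part 2: iteration from a marked point c *)
  (forall (e : nat) (c1 c2 : {poly algC}) (c : {fraction {poly algC}})
          (d : nat) (P1 Q1 : {poly algC}),
      binform e c1 -> binform e c2 -> coprime_forms e c1 c2 ->
      c = c1%:F / c2%:F -> c != 0 -> c != 1 -> c != ('X)%:F ->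
      (* F_1 = F_{t1,t2}(C)/gcd(F_{t1,t2}(C)) = (P1,Q1), of degree d *)
      binform d P1 -> binform d Q1 -> coprime_forms d P1 Q1 ->
      (d <= 4 * e + 2)%N ->
      (exists g : {poly algC}, binform (4 * e + 2 - d)%N g /\
          (Fmap (c1, c2)).1 = g * P1 /\ (Fmap (c1, c2)).2 = g * Q1) ->
      forall n : nat, (1 <= n)%N ->
        hres (4 ^ (n - 1) * d)%N (Fiter (P1, Q1) (n - 1)%N).1
                               (Fiter (P1, Q1) (n - 1)%N).2 =
          4%:R ^+ (A_exp n * d)%N
          * ((P1.[1] - Q1.[1]) * P1`_0 / P1`_d ^+ 2) ^+ A_exp n
          * hres d P1 Q1 ^+ (4 ^ (2 * (n - 1)))%N).
Proof.
split.
  by move=> d p q; apply: part1_gen.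
move=> e c1 c2 c d P1 Q1 _ _ _ Hc c0 _ _ HP HQ Hcop _ [g [_ [E1 E2]]] n Hn.
have c20 : c2 != 0.
  apply: contra c0 => /eqP c2E; rewrite Hc c2E tofrac0 invr0 mulr0.
  by [].
have [Hs Hq] := F1_sizes c20 HP HQ Hcop E1 E2.
case: n Hn => // k _.
rewrite subSS subn0.
by have [_ _ _ ->] := iter_gen Hs Hq k.
Qed.
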